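(* Let $Y$ be a finite set, $\mathcal{S}$ a set of splits of $Y$, $\alpha:\mathcal{S}\to\mathbb{R}_{>0}$, and $\delta=\delta_{(\mathcal{S},\alpha)}$ the associated split system diversity. Then $P_\delta=P^{(2)}_\delta$, and hence $T_\delta=T^{(2)}_\delta$.
   Context: A split of $Y$ is an unordered pair $\{C,D\}$ of non-empty disjoint subsets with $C\cup D=Y$; it splits $A\subseteq Y$ if $A\cap C\ne\emptyset$ and $A\cap D\ne\emptyset$. $\delta_{(\mathcal{S},\alpha)}(A)=\sum_{S\in\mathcal{S},\ S\text{ splits }A}\alpha(S)$. $P_\delta=\{f\in\mathbb{R}^{\mathcal{P}(Y)}: f(\emptyset)=0,\ \sum_{A\in\mathcal{A}}f(A)\ge\delta(\bigcup\mathcal{A})\text{ for all }\mathcal{A}\subseteq\mathcal{P}(Y)\}$ and $T_\delta$ is its set of minimal elements (coordinatewise order); $P^{(2)}_\delta=\{f\in\mathbb{R}^{\mathcal{P}(Y)}:f(\emptyset)=0,\ f(A)+f(B)\ge\delta(A\cup B)\ \forall A,B\in\mathcal{P}(Y)\}$ and $T^{(2)}_\delta$ is its set of minimal elements. *)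

(* Defs.v *)
From HB Require Import structures.
From mathcomp Require Import all_boot all_order all_algebra.
Set Implicit Arguments. Unset Strict Implicit. Unset Printing Implicit Defensive.
Import Order.TTheory GRing.Theory Num.Theory.
Local Open Scope ring_scope.

Section SplitDefs.
Variables (Y : finType) (R : realFieldType).

Definition is_split (s : {set {set Y}}) : bool :=
  [exists C : {set Y}, exists D : {set Y},
     [&& s == [set C; D], C != set0, D != set0,
         [disjoint C & D] & C :|: D == [set: Y]]].

Definition splits (s : {set {set Y}}) (A : {set Y}) : bool :=
  [forall C in s, A :&: C != set0].

Definition split_div (S : {set {set {set Y}}}) (alpha : {set {set Y}} -> R)
  (A : {set Y}) : R :=
  \sum_(s in S | splits s A) alpha s.

Definition inP (delta : {set Y} -> R) (f : {ffun {set Y} -> R}) : Prop :=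
  f set0 = 0 /\
  forall AA : {set {set Y}}, delta (\bigcup_(A in AA) A) <= \sum_(A in AA) f A.

Definition inP2 (delta : {set Y} -> R) (f : {ffun {set Y} -> R}) : Prop :=
  f set0 = 0 /\ forall A B : {set Y}, delta (A :|: B) <= f A + f B.

Definition minimal_in (P : {ffun {set Y} -> R} -> Prop) (f : {ffun {set Y} -> R}) : Prop :=
  P f /\ forall g, P g -> (forall A, g A <= f A) -> g = f.

Definition inT delta := minimal_in (inP delta).
Definition inT2 delta := minimal_in (inP2 delta).
End SplitDefs.

(* Main.v *)
Require Import Defs.
From HB Require Import structures.
From mathcomp Require Import all_boot all_order all_algebra.
Import Order.TTheory GRing.Theory Num.Theory.
Local Open Scope ring_scope.

Section Aux.
Variable Y : finType.
Implicit Types A B C D x y z : {set Y}.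

Lemma splitsE C D A : splits [set C; D] A = (A :&: C != set0) && (A :&: D != set0).
Proof.
apply/forall_inP/andP => [H|[H1 H2] E].
  by split; apply: H; rewrite !inE eqxx ?orbT.
by rewrite !inE => /orP[]/eqP->.
Qed.

Lemma meetU A B C : ((A :|: B) :&: C != set0) = (A :&: C != set0) || (B :&: C != set0).
Proof. by rewrite setIUl setU_eq0 negb_and. Qed.

Lemma meetS A B C : A \subset B -> A :&: C != set0 -> B :&: C != set0.
Proof.
move=> sAB /set0Pn[a]; rewrite inE => /andP[aA aC]; apply/set0Pn; exists a.
by rewrite inE (subsetP sAB) // aC.
Qed.

Lemma meetN C D A : (forall a : Y, (a \in C) || (a \in D)) -> A != set0 ->
  (A :&: C != set0) || (A :&: D != set0).
Proof.
move=> cov /set0Pn[a aA]; case/orP: (cov a) => H.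
  by apply/orP; left; apply/set0Pn; exists a; rewrite inE aA.
by apply/orP; right; apply/set0Pn; exists a; rewrite inE aA.
Qed.

Lemma key C D x y z B : (forall a : Y, (a \in C) || (a \in D)) ->
  x != set0 -> y != set0 -> z != set0 -> y \subset B -> z \subset B ->
  (2 * splits [set C; D] (x :|: B) + splits [set C; D] (z :|: y) <=
   2 * splits [set C; D] B + splits [set C; D] (x :|: y) + splits [set C; D] (z :|: x))%N.
Proof.
move=> cov nx ny nz syB szB.
have hx := meetN C D x cov nx; have hy := meetN C D y cov ny; have hz := meetN C D z cov nz.
have yC := meetS _ _ C syB; have yD := meetS _ _ D syB.
have zC := meetS _ _ C szB; have zD := meetS _ _ D szB.
rewrite !splitsE !meetU.
move: hx hy hz yC yD zC zD.
case: (x :&: C != set0); case: (x :&: D != set0);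
case: (y :&: C != set0); case: (y :&: D != set0);
case: (z :&: C != set0); case: (z :&: D != set0);
case: (B :&: C != set0); case: (B :&: D != set0) => //= ; by move=> *; try (exfalso; eauto).
Qed.
End Aux.
Section Main.
Variables (R : realFieldType) (Y : finType)
  (S : {set {set {set Y}}}) (alpha : {set {set Y}} -> R)
  (HS : forall s, s \in S -> is_split s)
  (Halpha : forall s, s \in S -> 0 < alpha s).
Implicit Types A B x y z : {set Y}.
Local Notation d := (split_div S alpha).

Lemma dsum A : d A = \sum_(s in S) alpha s *+ splits s A.
Proof.
rewrite /split_div big_mkcondr; apply: eq_bigr => s _.
by case: (splits s A).
Qed.

Lemma d_ge0 A : 0 <= d A.
Proof. rewrite dsum; apply: sumr_ge0 => s sS; rewrite mulrn_wge0 // ltW //; exact: Halpha. Qed.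

Lemma d0 : d set0 = 0.
Proof.
rewrite dsum big1 // => s sS.
have /existsP[C /existsP[D /and5P[/eqP-> _ _ _ _]]] := HS _ sS.
by rewrite splitsE !set0I eqxx.
Qed.

Lemma step x y z B : x != set0 -> y != set0 -> z != set0 -> y \subset B -> z \subset B ->
  d (x :|: B) *+ 2 + d (z :|: y) <= d B *+ 2 + d (x :|: y) + d (z :|: x).
Proof.
move=> nx ny nz syB szB.
rewrite !dsum -!sumrMnl -!big_split /=; apply: ler_sum => s sS.
have ha := Halpha _ sS.
have /existsP[C /existsP[D /and5P[/eqP Es _ _ _ /eqP cov]]] := HS _ sS.
have cov' : forall a : Y, (a \in C) || (a \in D).
  by move=> a; rewrite -in_setU cov inE.
rewrite -!mulrnA -!mulrnDr; apply: ler_wpMn2l; first exact: ltW ha.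
rewrite Es.
rewrite !(mulnC _ 2); exact: key.
Qed.

Fixpoint psum (g : {set Y} -> R) x (l : seq {set Y}) : R :=
  if l is y :: l' then g (x :|: y) + psum g y l' else 0.

Definition Ul (l : seq {set Y}) : {set Y} := \bigcup_(A <- l) A.

Lemma Ul_sub l A : A \in l -> A \subset Ul l.
Proof.
elim: l => [//|a l IH]; rewrite inE /Ul big_cons => /orP[/eqP->|/IH H].
  exact: subsetUl.
exact: subset_trans H (subsetUr _ _).
Qed.

Lemma lin (a b c e g p : R) : a + c <= b + e + g -> b <= p + c -> a <= e + p + g.
Proof.
move=> h1 h2; rewrite -(lerD2r c); apply: (le_trans h1).
have h3 : b + e + g <= p + c + e + g by rewrite !lerD2r.
apply: (le_trans h3); rewrite [p + c + e]addrAC [X in X <= _]addrAC [p + e]addrC.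
by [].
Qed.


Lemma cyc l x : l != [::] -> all (fun A => A != set0) (x :: l) ->
  d (x :|: Ul l) *+ 2 <= psum d x l + d (last x l :|: x).
Proof.
elim: l x => [//|y l' IH] x _ /= /and3P[nx ny nall].
case: l' IH nall => [|y' l''] IH nall.
  by rewrite /Ul big_cons big_nil setU0 /= addr0 mulr2n [y :|: x]setUC.
have lne : y' :: l'' != [::] by [].
move: (y' :: l'') lne IH nall => l' lne IH nall.
have IH' := IH y lne (introT andP (conj ny nall)).
have Hall : all (fun A => A != set0) (y :: l') by rewrite /= ny nall.
have zin := mem_last y l'.
have nz : last y l' != set0 by exact: (allP Hall).
have szB : last y l' \subset y :|: Ul l'.
  by have := Ul_sub _ _ zin; rewrite /Ul big_cons.
rewrite {1}/Ul big_cons -/(Ul l').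
exact: (lin _ _ _ _ _ _ (step _ _ _ _ nx ny nz (subsetUl _ _) szB) IH').
Qed.

Lemma psum_le (f : {set Y} -> R) :
  (forall A B, d (A :|: B) <= f A + f B) ->
  forall l x, psum d x l <= f x + (\sum_(A <- l) f A) *+ 2 - f (last x l).
Proof.
move=> Hf; elim=> [|y l' IH] x /=.
  by rewrite big_nil mul0rn addr0 subrr.
rewrite big_cons mulrnDl mulr2n.
apply: le_trans (lerD (Hf x y) (IH y)) _.
rewrite !addrA.
by [].
Qed.


Lemma PtoP2 f : inP d f <-> inP2 d f.
Proof.
split.
  case=> f0 H; split=> // A B; case: (eqVneq A B) => [<-|nAB].
    have := H [set A]; rewrite !big_set1 setUid => h.
    apply: (le_trans h); rewrite lerDl; exact: le_trans (d_ge0 _) h.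
  have nA : A \notin [set B] by rewrite inE.
  have := H [set A; B]; rewrite !big_setU1 //= !big_set1 //.
case=> f0 H; split=> // AA.
have fd A : d A <= f A by have := H A set0; rewrite setU0 f0 addr0.
pose l := [seq A <- enum AA | A != set0].
have E1 : \bigcup_(A in AA) A = Ul l.
  rewrite /Ul big_filter -big_enum [RHS]big_mkcond /=; apply: eq_bigr => A _.
  by case: (eqVneq A set0) => [->|].
have E2 : \sum_(A in AA) f A = \sum_(A <- l) f A.
  rewrite big_filter -big_enum [RHS]big_mkcond /=; apply: eq_bigr => A _.
  by case: (eqVneq A set0) => [->|].
have Hall : all (fun A => A != set0) l by exact: filter_all.
rewrite E1 E2; case: l Hall {E1 E2} => [|x l'] Hall.
  by rewrite /Ul !big_nil d0.
case: l' Hall => [|y l''] Hall.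
  by rewrite /Ul !big_cons !big_nil setU0 addr0; exact: fd.
have h1 := cyc (y :: l'') x isT Hall.
have h2 := psum_le f H (y :: l'') x.
have h3 := H (last x (y :: l'')) x.
rewrite /Ul big_cons -/(Ul (y :: l'')) big_cons.
suff: d (x :|: Ul (y :: l'')) *+ 2 <= (f x + \sum_(j <- y :: l'') f j) *+ 2.
  by rewrite lerMn2r.
apply: (le_trans h1); apply: le_trans (lerD h2 h3) _.
rewrite addrA subrK mulrnDl mulr2n addrAC.
by [].
Qed.

End Main.

Theorem mainTheorem17 (R : realFieldType) (Y : finType)
  (S : {set {set {set Y}}}) (alpha : {set {set Y}} -> R)
  (HS : forall s, s \in S -> is_split s)
  (Halpha : forall s, s \in S -> 0 < alpha s) :
  (forall f, inP (split_div S alpha) f <-> inP2 (split_div S alpha) f) /\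
  (forall f, inT (split_div S alpha) f <-> inT2 (split_div S alpha) f).
Proof.
have E := @PtoP2 R Y S alpha HS Halpha.
split; first exact: E.
move=> f; rewrite /inT /inT2 /minimal_in; split; case=> h1 h2; split.
- by apply/E.
- by move=> g /E; exact: h2.
- by apply/E.
- by move=> g /E; exact: h2.
Qed.
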